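(* Let $\{x_k\}$ be generated by the Subgradient-InexP method with the exogenous stepsize rule, under the standing assumptions, and let $\rho:=\nu+2\mu$ where $\nu=\frac{1+2\bar\gamma}{1-2\bar\lambda}$. Then for every $x\in C$ and every $k=0,1,\dots$, $$\|x_{k+1}-x\|^2\le\|x_k-x\|^2+\rho\alpha_k^2-2\frac{\alpha_k}{\eta_k}\big[f(x_k)-f(x)\big].$$
   Context: Problem: minimize a convex $f:\mathbb{R}^n\to\mathbb{R}$ over a nonempty closed convex $C\subset\mathbb{R}^n$. For $\epsilon\ge0$, $\partial_\epsilon f(x):=\{s: f(y)\ge f(x)+\langle s,y-x\rangle-\epsilon\ \forall y\}$. Relative error tolerance function: any $\varphi_{\gamma,\theta,\lambda}:(\mathbb{R}^n)^3\to[0,\infty)$ with $\varphi_{\gamma,\theta,\lambda}(u,v,w)\le\gamma\|v-u\|^2+\theta\|w-v\|^2+\lambda\|w-u\|^2$; for $u\in C$, $\mathcal{P}_C(\varphi_{\gamma,\theta,\lambda},u,v):=\{w\in C:\langle v-w,z-w\rangle\le\varphi_{\gamma,\theta,\lambda}(u,v,w)\ \forall z\in C\}$. Subgradient-InexP method: $x_0\in C$; at iteration $k$, if $0\in\partial f(x_k)$ stop; otherwise choose nonzero $s_k\in\partial_{\epsilon_k}f(x_k)$, stepsize $t_k>0$, and $x_{k+1}\in\mathcal{P}_C(\varphi_{\gamma_k,\theta_k,\lambda_k},x_k,x_k-t_ks_k)$. Standing assumptions: $\gamma_k\in[0,\bar\gamma)$, $\theta_k\in[0,\bar\theta)$, $\lambda_k\in[0,\bar\lambda)$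 with $\bar\gamma\ge0$, $\bar\theta,\bar\lambda\in[0,1/2)$; the sequence is infinite. Exogenous stepsize rule: $\mu\ge0$; $\{\alpha_k\}$, $\{\epsilon_k\}$ nonnegative, $\{\epsilon_k\}$ nonincreasing, $\sum_k\alpha_k=+\infty$, $\sum_k\alpha_k^2<+\infty$, $\epsilon_k\le\mu\alpha_k$ for all $k$; $t_k:=\alpha_k/\eta_k$ with $\eta_k:=\max\{1,\|s_k\|\}$. *)

(* Defs.v *)
From HB Require Import structures.
From mathcomp Require Import all_boot all_order all_algebra.
From mathcomp Require Import all_classical all_reals all_analysis.
Set Implicit Arguments. Unset Strict Implicit. Unset Printing Implicit Defensive.
Import Order.TTheory GRing.Theory Num.Theory.
Import numFieldNormedType.Exports.
Local Open Scope classical_set_scope.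
Local Open Scope ring_scope.

Section Defs.
Variables (R : realType) (n : nat).
Local Notation vec := 'rV[R]_n.

Definition dotv (u v : vec) : R := \sum_(i < n) u ord0 i * v ord0 i.
Definition enorm (u : vec) : R := Num.sqrt (dotv u u).

Definition convex_fun (f : vec -> R) : Prop :=
  forall (x y : vec) (l : R), 0 <= l <= 1 ->
    f (l *: x + (1 - l) *: y) <= l * f x + (1 - l) * f y.

Definition convex_set_Rn (C : set vec) : Prop :=
  forall (x y : vec) (l : R), C x -> C y -> 0 <= l <= 1 ->
    C (l *: x + (1 - l) *: y).

Definition eps_subdiff (f : vec -> R) (eps : R) (x : vec) : set vec :=
  [set s | forall y : vec, f y >= f x + dotv s (y - x) - eps].

Definition subdiff (f : vec -> R) (x : vec) : set vec := eps_subdiff f 0 x.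

Definition rel_err_tol (gam the lam : R) (phi : vec -> vec -> vec -> R) : Prop :=
  forall u v w : vec, 0 <= phi u v w /\
    phi u v w <= gam * enorm (v - u) ^+ 2 + the * enorm (w - v) ^+ 2
                 + lam * enorm (w - u) ^+ 2.

Definition inexact_proj (C : set vec) (phi : vec -> vec -> vec -> R)
    (u v : vec) : set vec :=
  [set w | C w /\ forall z : vec, C z -> dotv (v - w) (z - w) <= phi u v w].

(* Subgradient-InexP iterates (nonterminating) *)
Definition subgrad_inexp (f : vec -> R) (C : set vec)
    (x s : nat -> vec) (eps t gam the lam : nat -> R)
    (phi : nat -> vec -> vec -> vec -> R) : Prop :=
  C (x 0%N) /\
  forall k : nat,
    ~ subdiff f (x k) 0 /\
    s k != 0 /\ eps_subdiff f (eps k) (x k) (s k) /\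
    0 < t k /\
    rel_err_tol (gam k) (the k) (lam k) (phi k) /\
    inexact_proj C (phi k) (x k) (x k - t k *: s k) (x k.+1).

End Defs.

(* Main.v *)
Require Import Defs.
From HB Require Import structures.
From mathcomp Require Import all_boot all_order all_algebra.
From mathcomp Require Import all_classical all_reals all_analysis.
From mathcomp Require Import ring lra.
Import Order.TTheory GRing.Theory Num.Theory.
Import numFieldNormedType.Exports.
Local Open Scope classical_set_scope.
Local Open Scope ring_scope.

Section Aux.
Variables (R : realType) (n : nat).
Implicit Types (u v w : 'rV[R]_n) (a : R).

Lemma dotvC u v : dotv u v = dotv v u.
Proof. by apply: eq_bigr => i _; rewrite mulrC. Qed.

Lemma dotvDl u v w : dotv (u + v) w = dotv u w + dotv v w.
Proof. rewrite /dotv -big_split; apply: eq_bigr => i _; rewrite !mxE mulrDl //. Qed.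

Lemma dotvZl a u v : dotv (a *: u) v = a * dotv u v.
Proof. rewrite /dotv mulr_sumr; apply: eq_bigr => i _; rewrite !mxE mulrA //. Qed.

Lemma dotvNl u v : dotv (- u) v = - dotv u v.
Proof. by rewrite -scaleN1r dotvZl mulN1r. Qed.

Lemma dotv_ge0 u : 0 <= dotv u u.
Proof. by apply: sumr_ge0 => i _; rewrite -expr2 sqr_ge0. Qed.

Lemma enorm2 u : enorm u ^+ 2 = dotv u u.
Proof. by rewrite /enorm sqr_sqrtr // dotv_ge0. Qed.

Lemma enorm_ge0 u : 0 <= enorm u.
Proof. exact: sqrtr_ge0. Qed.

Lemma polar u v : dotv (u - v) (u - v) = dotv u u + dotv v v - 2 * dotv u v.
Proof.
rewrite dotvDl dotvNl !(dotvC _ (u - v)) !dotvDl !dotvNl (dotvC u v).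
rewrite mulr2n; ring.
Qed.

Lemma dotv_swap u v : dotv (u - v) (u - v) = dotv (v - u) (v - u).
Proof. by rewrite -opprB dotvNl dotvC dotvNl opprK. Qed.

End Aux.
Arguments polar {R n}. Arguments dotv_swap {R n}. Arguments dotvZl {R n}. Arguments dotvC {R n}. Arguments dotvNl {R n}. Arguments dotvDl {R n}.

Theorem mainTheorem3 (R : realType) (n : nat)
  (f : 'rV[R]_n -> R) (C : set 'rV[R]_n)
  (x s : nat -> 'rV[R]_n) (eps t alpha gam the lam : nat -> R)
  (phi : nat -> 'rV[R]_n -> 'rV[R]_n -> 'rV[R]_n -> R)
  (gbar thbar lbar mu : R) :
  convex_fun f ->
  C !=set0 -> closed C -> convex_set_Rn C ->
  0 <= gbar -> 0 <= thbar < 1/2 -> 0 <= lbar < 1/2 ->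
  (forall k, 0 <= gam k < gbar) ->
  (forall k, 0 <= the k < thbar) ->
  (forall k, 0 <= lam k < lbar) ->
  subgrad_inexp f C x s eps t gam the lam phi ->
  (* exogenous stepsize rule *)
  0 <= mu ->
  (forall k, 0 <= alpha k) ->
  (forall k, 0 <= eps k) ->
  nonincreasing_seq eps ->
  series alpha @ \oo --> +oo ->
  cvg (series (fun k => alpha k ^+ 2) @ \oo) ->
  (forall k, eps k <= mu * alpha k) ->
  (forall k, t k = alpha k / Num.max 1 (enorm (s k))) ->
  let nu := (1 + 2 * gbar) / (1 - 2 * lbar) in
  let rho := nu + 2 * mu in
  forall z : 'rV[R]_n, C z -> forall k : nat,
    enorm (x k.+1 - z) ^+ 2 <=
      enorm (x k - z) ^+ 2 + rho * alpha k ^+ 2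
      - 2 * (alpha k / Num.max 1 (enorm (s k))) * (f (x k) - f z).
Proof.
move=> _ _ _ _ g0 /andP[th0 th1] /andP[l0 l1] hg hth hl [C0 hit] mu0 al0 ep0 _ _ _
  hep ht nu rho z Cz k.
have [_ [_ [hsub [t0 [herr [_ hproj]]]]]] := hit k.
have Cu : C (x k).
  case: k {t0 herr hproj hsub} => // k.
  by case: (hit k) => _ [_ [_ [_ [_ [Cw _]]]]].
set u := x k in Cu hsub hproj *; set w := x k.+1 in hproj *.
set S := s k in hsub hproj *; set T := t k in hproj t0 *.
set v := u - T *: S in hproj.
have hP := hproj.
have P1 := hP u Cu. have P2 := hP z Cz.
have [_ Phi] := (herr : rel_err_tol _ _ _ _) u v w.
rewrite !enorm2 in Phi *.
set a := dotv (w - u) (w - u) in Phi *.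
set b := dotv (v - u) (v - u) in Phi.
set c := dotv (w - v) (w - v) in Phi.
set e := dotv (w - z) (w - z).
set g := dotv (u - z) (u - z).
set q := dotv S (u - z).
set sS := dotv S S.
have E2 : 2 * dotv (v - w) (u - w) = c + a - b.
  have := polar (v - w) (u - w).
  have -> : v - w - (u - w) = v - u by rewrite opprB addrA subrK.
  rewrite -/b (dotv_swap v w) -/c (dotv_swap u w) -/a; lra.
have E3 : 2 * dotv (v - w) (z - w) = c + e - dotv (v - z) (v - z).
  have := polar (v - w) (z - w).
  have -> : v - w - (z - w) = v - z by rewrite opprB addrA subrK.
  rewrite (dotv_swap (v) w) -/c (dotv_swap z w) -/e; lra.
have E4 : dotv (v - z) (v - z) = g - 2 * T * q + T ^+ 2 * sS.
  have := polar (u - z) (T *: S).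
  have -> : u - z - T *: S = v - z.
    by rewrite /v addrAC.
  rewrite -/g dotvZl dotvC dotvZl -/sS dotvC dotvZl -/q => ->; rewrite expr2; ring.
have E5 : b = T ^+ 2 * sS.
  rewrite /b dotv_swap /v opprB addrC subrK dotvZl dotvC dotvZl -/sS expr2; ring.
have E6 : dotv S (z - u) = - q.
  by rewrite -opprB dotvC dotvNl dotvC.
have Hf := hsub z; rewrite E6 in Hf.
have [gk0 gk1] := andP (hg k); have [tk0 tk1] := andP (hth k); have [lk0 lk1] := andP (hl k).
set gk := gam k in Phi gk0 gk1 *; set tk := the k in Phi tk0 tk1 *; set lk := lam k in Phi lk0 lk1 *.
have a0 : 0 <= a by apply: dotv_ge0.
have b0 : 0 <= b by apply: dotv_ge0.
have c0 : 0 <= c by apply: dotv_ge0.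
have K : (1 - 2 * lk) * a <= (1 + 2 * gk) * b.
  have : (1 - 2 * tk) * c >= 0 by apply: mulr_ge0 => //; lra.
  lra.
set Z := e - g + 2 * T * q.
have HZ : (1 - 2 * lk) * Z <= (1 + 2 * gk) * b.
  have HY : Z - b <= 2 * gk * b + 2 * lk * a.
    have : (1 - 2 * tk) * c >= 0 by apply: mulr_ge0 => //; lra.
    rewrite /Z; lra.
  have : (1 - 2 * lk) * (Z - b) <= (1 - 2 * lk) * (2 * gk * b + 2 * lk * a).
    by apply: ler_wpM2l => //; lra.
  have : 2 * lk * ((1 - 2 * lk) * a) <= 2 * lk * ((1 + 2 * gk) * b).
    by apply: ler_wpM2l => //; lra.
  move=> h1 h2; nra.
have nu0 : 0 <= nu by rewrite /nu divr_ge0 //; lra.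
have HZ2 : Z <= nu * b.
  have [Zn|Zp] := lerP Z 0.
    by apply: le_trans Zn _; apply: mulr_ge0.
  rewrite /nu mulrAC ler_pdivlMr; last by lra.
  have : Z * (1 - 2 * lbar) <= Z * (1 - 2 * lk) by apply: ler_wpM2l; lra.
  have : (1 + 2 * gk) * b <= (1 + 2 * gbar) * b by apply: ler_wpM2r => //; lra.
  lra.
set eta := Num.max 1 (enorm S).
have eta1 : 1 <= eta by rewrite /eta le_max lexx.
have etaS : enorm S <= eta by rewrite /eta le_max lexx orbT.
have eta0 : 0 < eta by lra.
have hT : T = alpha k / eta by rewrite /T ht.
have Tal : T <= alpha k.
  rewrite hT ler_pdivrMr // -{1}(mulr1 (alpha k)); apply: ler_wpM2l => //.
have TS : T * enorm S <= alpha k.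
  rewrite hT mulrAC ler_pdivrMr //; apply: ler_wpM2l => //.
have hb : b <= alpha k ^+ 2.
  rewrite E5 /sS -enorm2 -exprMn; apply: lerXn2r => //.
    by rewrite nnegrE mulr_ge0 // ?enorm_ge0; lra.
  by rewrite nnegrE.
have Te : T * eps k <= mu * alpha k ^+ 2.
  have : T * eps k <= T * (mu * alpha k) by apply: ler_wpM2l => //; lra.
  have : T * (mu * alpha k) <= alpha k * (mu * alpha k).
    by apply: ler_wpM2r => //; apply: mulr_ge0.
  rewrite expr2; lra.
have Hq : - q <= f z - f u + eps k by lra.
have Hq2 : T * (- q) <= T * (f z - f u + eps k) by apply: ler_wpM2l => //; lra.
have : nu * b <= nu * alpha k ^+ 2 by apply: ler_wpM2l.
rewrite -/eta -hT /rho; rewrite /Z in HZ2; lra.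
Qed.
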